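(* Let $A$ be a commutative ring. Any intersection $\bigcap_i \mathfrak{q}_i$ of primary ideals $\mathfrak{q}_i$ of $A$ is an $(A \setminus \bigcup_i \sqrt{\mathfrak{q}_i})$-factroid of $A$. In particular, any intersection $\bigcap_i \mathfrak{p}_i$ of prime ideals $\mathfrak{p}_i$ of $A$ is an $(A\setminus \bigcup_i \mathfrak{p}_i)$-factroid of $A$.
   Context: For $T\subseteq A$, a $T$-factroid of $A$ is an additive subgroup $F$ of $A$ such that for all $a\in A$ and $t\in T$, $ta\in F$ implies $a\in F$. *)

(* Defs.v *)
From mathcomp Require Import all_boot all_algebra.
Set Implicit Arguments. Unset Strict Implicit. Unset Printing Implicit Defensive.
Import GRing.Theory.
Local Open Scope ring_scope.

Definition is_ideal (A : comPzRingType) (I : A -> Prop) : Prop :=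
  I 0 /\ (forall x y, I x -> I y -> I (x - y)) /\ (forall a x, I x -> I (a * x)).

Definition is_prime_ideal (A : comPzRingType) (p : A -> Prop) : Prop :=
  is_ideal p /\ ~ p 1 /\ (forall a b, p (a * b) -> p a \/ p b).

Definition is_primary_ideal (A : comPzRingType) (q : A -> Prop) : Prop :=
  is_ideal q /\ ~ q 1 /\
  (forall a b, q (a * b) -> q a \/ exists n : nat, q (b ^+ n)).

Definition radical (A : comPzRingType) (q : A -> Prop) : A -> Prop :=
  fun x => exists n : nat, q (x ^+ n).

Definition is_add_subgroup (A : comPzRingType) (F : A -> Prop) : Prop :=
  F 0 /\ (forall x y, F x -> F y -> F (x - y)).

Definition is_factroid (A : comPzRingType) (T F : A -> Prop) : Prop :=
  is_add_subgroup F /\ (forall (a t : A), T t -> F (t * a) -> F a).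

(* Main.v *)
Require Import Defs.
From mathcomp Require Import all_boot all_algebra.
Local Open Scope ring_scope.

Theorem proposition4p7 (A : comPzRingType) :
  (forall (I : Type) (q : I -> A -> Prop),
      (forall i, is_primary_ideal (q i)) ->
      is_factroid (fun t : A => ~ exists i, radical (q i) t)
                  (fun a : A => forall i, q i a))
  /\
  (forall (I : Type) (p : I -> A -> Prop),
      (forall i, is_prime_ideal (p i)) ->
      is_factroid (fun t : A => ~ exists i, p i t)
                  (fun a : A => forall i, p i a)).
Proof.
split.
- move=> I q Hq; split.
  + split; first by move=> i; case: (Hq i) => [[H0 _] _].
    by move=> x y Hx Hy i; case: (Hq i) => [[_ [Hs _]] _]; apply: Hs.
  + move=> a t Ht Hta i; case: (Hq i) => [_ [_ Hp]].
    have := Hta i; rewrite GRing.mulrC => /Hp [//|[n Hn]].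
    by exfalso; apply: Ht; exists i, n.
- move=> I p Hp; split.
  + split; first by move=> i; case: (Hp i) => [[H0 _] _].
    by move=> x y Hx Hy i; case: (Hp i) => [[_ [Hs _]] _]; apply: Hs.
  + move=> a t Ht Hta i; case: (Hp i) => [_ [_ Hpr]].
    have := Hta i => /Hpr [Hpt|//].
    by exfalso; apply: Ht; exists i.
Qed.
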